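(* Let $H,K$ be complex Hilbert spaces with $\dim H=n$, $\dim K=m$, and let $r$ be an integer with $1\le r\le n\le m$. Then there is an $r$-tuple $(v_1,\dots,v_r)$ of operators $v_k\in\mathcal B(H,K)$ with $v_1^*v_1+\cdots+v_r^*v_r=\mathbf 1_H$ such that the family of $r^2$ operators $\{v_i^*v_j:1\le i,j\le r\}$ is linearly independent in $\mathcal B(H)$. *)

(* Defs.v *)
(* Finite-dimensional complex Hilbert spaces H, K of dimensions
   n, m are identified with the column spaces C^n, C^m (standard inner product),
   over an arbitrary numeric algebraically closed field C (this includes the
   complex numbers). Operators in B(H,K) are m x n matrices. *)
From HB Require Import structures.
From mathcomp Require Import all_boot all_order all_algebra.
Set Implicit Arguments. Unset Strict Implicit. Unset Printing Implicit Defensive.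
Import Order.TTheory GRing.Theory Num.Theory.
Local Open Scope ring_scope.

Definition adjmx (C : numClosedFieldType) (m n : nat) (A : 'M[C]_(m, n)) : 'M[C]_(n, m) :=
  (map_mx Num.conj A)^T.

Definition mx_lin_indep (C : numClosedFieldType) (p q : nat) (I : finType)
  (F : I -> 'M[C]_(p, q)) : Prop :=
  forall c : I -> C, \sum_(i : I) c i *: F i = 0 -> forall i, c i = 0.

(* Main.v *)
Require Import Defs.
From HB Require Import structures.
From mathcomp Require Import all_boot all_order all_algebra zify.
Import Order.TTheory GRing.Theory Num.Theory.
Local Open Scope ring_scope.

Lemma sum_delta (R : nzRingType) (I : finType) (k : I) (F : I -> R) :
  \sum_(a : I) (a == k)%:R * F a = F k.
Proof.
rewrite (bigD1 k) //= eqxx mul1r big1 ?addr0 // => a /negbTE ->.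
by rewrite mul0r.
Qed.

Section S.
Variables (C : numClosedFieldType) (n m r : nat).
Hypotheses (hr : (1 <= r)%N) (hrn : (r <= n)%N) (hnm : (n <= m)%N).

Definition vv (k : 'I_r) : 'M[C]_(m, n) :=
  \matrix_(a, b) ((((a : nat) == 0%N) && ((b : nat) == k))%:R
                  + (((k : nat) == 0%N) && ((a : nat) == b) && (r <= b)%N)%:R).

Lemma prod_entry (i j : 'I_r) (b c : 'I_n) :
  (adjmx (vv i) *m vv j) b c =
  (((b : nat) == i) && ((c : nat) == j))%:R +
  (((i : nat) == 0%N) && ((j : nat) == 0%N) && ((b : nat) == c) && (r <= b)%N)%:R.
Proof.
have m0 : (0 < m)%N by apply: leq_trans hnm; apply: leq_trans hrn.
have bm : (b < m)%N by apply: leq_trans (ltn_ord b) hnm.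
rewrite !mxE.
transitivity (\sum_(a < m)
   ((a == Ordinal m0)%:R * (((b : nat) == i) && ((c : nat) == j))%:R
  + (a == Ordinal bm)%:R *
   (((i : nat) == 0%N) && ((j : nat) == 0%N) && ((b : nat) == c) && (r <= b)%N)%:R) : C).
  apply: eq_bigr => a _.
  rewrite !mxE rmorphD !rmorph_nat -!natrM -!natrD -?natrM; congr (_%:R).
  have -> : (a == Ordinal m0) = ((a : nat) == 0%N) by [].
  have -> : (a == Ordinal bm) = ((a : nat) == b) by [].
  case: (eqVneq (a : nat) 0%N) => a0; case: (eqVneq (a : nat) b) => ab;
  case: (eqVneq (b : nat) i) => bi; case: (eqVneq (c : nat) j) => cj;
  case: (eqVneq (a : nat) c) => ac;
  case: (eqVneq (i : nat) 0%N) => i0; case: (eqVneq (j : nat) 0%N) => j0;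
  case: (leqP r b) => rb; case: (leqP r c) => rc; rewrite /= ?muln0 ?mul0n //;
  lia.
by rewrite big_split /= !sum_delta.
Qed.

End S.

Theorem lemma5p2 (C : numClosedFieldType) (n m r : nat)
  (hr : (1 <= r)%N) (hrn : (r <= n)%N) (hnm : (n <= m)%N) :
  exists v : 'I_r -> 'M[C]_(m, n),
    \sum_(k < r) adjmx (v k) *m v k = 1%:M /\
    mx_lin_indep (fun ij : 'I_r * 'I_r => adjmx (v ij.1) *m v ij.2).
Proof.
exists (vv C n m r); split.
  apply/matrixP => b c; rewrite summxE mxE.
  under eq_bigr do rewrite prod_entry //.
  pose k0 : 'I_r := Ordinal hr.
  pose k1 : 'I_r := insubd k0 (b : nat).
  transitivity (\sum_(k < r) ((k == k1)%:R * (((b : nat) < r)%N && ((c : nat) == b))%:R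
     + (k == k0)%:R * (((b : nat) == c) && (r <= b)%N)%:R) : C).
    apply: eq_bigr => k _.
    have -> : (k == k1) = ((k : nat) == if ((b : nat) < r)%N then (b : nat) else 0%N).
      by rewrite /k1 -val_eqE val_insubd.
    have -> : (k == k0) = ((k : nat) == 0%N) by [].
    rewrite -!natrM -!natrD; congr (_%:R).
    have := ltn_ord k; case: (ltnP b r) => br kr; case: (eqVneq (k : nat) b) => kb;
    case: (eqVneq (c : nat) b) => cb; case: (eqVneq (c : nat) k) => ck;
    case: (eqVneq (k : nat) 0%N) => k0'; rewrite /= ?muln0 ?mul0n //; lia.
  rewrite big_split /= !sum_delta -natrD.
  have -> : (b == c) = ((b : nat) == c) by [].
  congr (_%:R).
  case: (ltnP b r) => br; case: (eqVneq (c : nat) b) => cb;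
  case: (eqVneq (b : nat) c) => bc; rewrite /= //; lia.
move=> c0 H [i j].
have := congr1 (fun M : 'M[C]_n => M (widen_ord hrn i) (widen_ord hrn j)) H.
rewrite summxE mxE => <-.
rewrite -(@sum_delta C _ (i, j) c0).
apply: eq_bigr => -[p q] _ /=.
rewrite mxE prod_entry //= (leqNgt r i) ltn_ord /= andbF addr0 mulrC.
by rewrite xpair_eqE (eq_sym p) (eq_sym q).
Qed.
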